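(* In the Shepp--Olkin setting with $p_i'\ge0$ for all $i$ and $v=\sum_ip_i'>0$, for every $t$ and every $k\in\{0,\ldots,n-1\}$ with $f_k(t)>0$ and $f_{k+1}(t)>0$, the coefficients $$\alpha_k(t)=\frac{\sum_{i=1}^np_i'p_i(t)f_{k-1}^{(i)}(t)}{vf_k(t)}$$ satisfy $\alpha_k(t)\le\alpha_{k+1}(t)$.
   Context: Shepp--Olkin setting: $p_1,\ldots,p_n:[0,1]\to[0,1]$ are affine functions with constant derivatives $p_i'$. $f_k(t)$, $k=0,\ldots,n$, is the probability mass function of a sum of independent Bernoulli variables with parameters $p_1(t),\ldots,p_n(t)$; $f^{(i)}_k(t)$ is the mass function of the sum omitting the $i$-th variable (extended by $0$ outside $\{0,\ldots,n-1\}$). *)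

(* Defs.v *)
(* the statement is algebraic at a fixed t. *)
From HB Require Import structures.
From mathcomp Require Import all_boot all_order all_algebra.
Set Implicit Arguments. Unset Strict Implicit. Unset Printing Implicit Defensive.
Import Order.TTheory GRing.Theory Num.Theory.
Local Open Scope ring_scope.

(* Probability that a sum of independent Bernoulli(q j), j : 'I_n, equals k. *)
Definition bern_pmf (R : realFieldType) (n : nat) (q : 'I_n -> R) (k : nat) : R :=
  \sum_(A : {set 'I_n} | #|A| == k)
     (\prod_(j in A) q j) * \prod_(j in ~: A) (1 - q j).

Definition bern_pmf_omit (R : realFieldType) (n : nat) (q : 'I_n -> R)
    (i : 'I_n) (k : nat) : R :=
  \sum_(A : {set 'I_n} | (i \notin A) && (#|A| == k))
     (\prod_(j in A) q j) * \prod_(j in ~: A :\ i) (1 - q j).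

(* f^{(i)}_{k-1}, extended by 0 at k-1 = -1. *)
Definition bern_pmf_omit_pred (R : realFieldType) (n : nat) (q : 'I_n -> R)
    (i : 'I_n) (k : nat) : R :=
  if k is k'.+1 then bern_pmf_omit q i k' else 0.

(* Affine functions p_i(s) = a_i + b_i s, with derivative p_i' = b_i. *)
Definition affp (R : realFieldType) (n : nat) (a b : 'I_n -> R) (s : R) : 'I_n -> R :=
  fun i => a i + b i * s.

Definition alpha (R : realFieldType) (n : nat) (a b : 'I_n -> R) (t : R) (k : nat) : R :=
  (\sum_(i < n) b i * affp a b t i * bern_pmf_omit_pred (affp a b t) i k)
  / ((\sum_(i < n) b i) * bern_pmf (affp a b t) k).

(* Main.v *)
Require Import Defs.
From HB Require Import structures.
From mathcomp Require Import all_boot all_order all_algebra.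
From mathcomp Require Import ring lra zify.
Import Order.TTheory GRing.Theory Num.Theory.
Local Open Scope ring_scope.
Set Implicit Arguments. Unset Strict Implicit.

Section S.
Variable R : realFieldType.

Definition L (x : R) : {poly R} := x%:P * 'X + (1 - x)%:P.

Lemma prod_if n (q : 'I_n -> R) (J : {set 'I_n}) :
  \prod_(j < n) (if j \in J then (q j)%:P * 'X else (1 - q j)%:P) =
  ((\prod_(j in J) q j) * \prod_(j in ~: J) (1 - q j))%:P * 'X^#|J|.
Proof.
rewrite (bigID (mem J)) /=.
rewrite (eq_bigr (fun j => (q j)%:P * 'X)); last by move=> j ->.
rewrite [X in _ * X](eq_bigr (fun j => (1 - q j)%:P)); last by move=> j Hj; rewrite (negbTE Hj).
rewrite big_split /= prodr_const.
idtac.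
rewrite polyCM !rmorph_prod /= [RHS]mulrAC.
by congr (_ * _); apply: eq_bigl => j; rewrite in_setC.
Qed.

Lemma bern_coef n (q : 'I_n -> R) k :
  bern_pmf q k = (\prod_(j < n) L (q j))`_k.
Proof.
rewrite /L (@bigA_distr _ _ _ _ _ _ (fun j => (q j)%:P * 'X) (fun j => (1 - q j)%:P)).
rewrite coef_sum (bigID (fun J : {set 'I_n} => #|J| == k)) /=.
rewrite [X in _ + X]big1 ?addr0; last first.
  by move=> J /negbTE HJ; rewrite prod_if coefCM coefXn eq_sym HJ mulr0.
rewrite /bern_pmf; apply: eq_bigr => J /eqP HJ.
by rewrite prod_if coefCM coefXn HJ eqxx mulr1.
Qed.


Definition q0 n (q : 'I_n -> R) (i : 'I_n) : 'I_n -> R :=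
  fun j => if j == i then 0 else q j.

Lemma omit_eq n (q : 'I_n -> R) i k :
  bern_pmf_omit q i k = bern_pmf (q0 q i) k.
Proof.
rewrite /bern_pmf (bigID (fun A : {set 'I_n} => i \in A)) /=.
rewrite big1 ?add0r; last first.
  by move=> A /andP[_ HiA]; rewrite (bigD1 i) //= /q0 eqxx !mul0r.
rewrite /bern_pmf_omit; apply: eq_big => [A|A /andP[HiA _]]; first by rewrite andbC.
congr (_ * _).
  apply: eq_bigr => j Hj; rewrite /q0; by case: eqP => // Eji; move: HiA; rewrite -Eji Hj.
rewrite [RHS](bigD1 i) /=; last by rewrite in_setC.
rewrite /q0 eqxx subr0 mul1r; apply: eq_big => [j|j]; first by rewrite in_setD1 andbC.
by rewrite in_setD1 => /andP[Hj _]; rewrite (negbTE Hj).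
Qed.

Lemma prod_split n (q : 'I_n -> R) i :
  \prod_(j < n) L (q j) = L (q i) * \prod_(j < n) L (q0 q i j).
Proof.
rewrite (bigD1 i) //= [X in _ = _ * X](bigD1 i) //= /q0 eqxx /L mul0r subr0 add0r mul1r.
by congr (_ * _); apply: eq_bigr => j Hj; rewrite (negbTE Hj).
Qed.

Definition cz (p : {poly R}) (m : int) : R :=
  match m with Posz k => p`_k | Negz _ => 0 end.

Lemma cz_neg p m : m < 0 -> cz p m = 0.
Proof. by case: m. Qed.

Lemma czL x p m : cz (L x * p) m = x * cz p (m - 1) + (1 - x) * cz p m.
Proof.
case: m => [[|k]|k].
- rewrite [cz p (_ - 1)]cz_neg //= /L mulrDl -mulrA coefD coefCM coefXM coefCM /=.
  by rewrite mulr0 add0r.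
- have -> : (Posz k.+1 - 1 = Posz k)%R by lia.
  by rewrite /= /L mulrDl -mulrA coefD coefCM coefXM coefCM.
- by rewrite !cz_neg ?mulr0 ?addr0 //; lia.
Qed.


Definition PF2 (p : {poly R}) := (forall m, 0 <= cz p m) /\
  (forall a b s : int, a <= b -> 0 <= s -> cz p (a - s) * cz p (b + s) <= cz p a * cz p b).

Lemma cz1 m : cz 1 m = if m == 0 then 1 else 0.
Proof. by case: m => [[|k]|k] //=; rewrite coef1. Qed.

Lemma PF2_1 : PF2 1.
Proof.
split=> [m|a b s hab hs]; first by rewrite cz1; case: ifP => _; rewrite ?ler01 ?lexx.
rewrite !cz1.
case: (a =P 0); case: (b =P 0); case: (a - s =P 0); case: (b + s =P 0) => *;
  rewrite ?mulr1 ?mul1r ?mul0r ?mulr0 ?lexx ?ler01 //; exfalso; lia.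
Qed.

Lemma PF2_L x p : 0 <= x <= 1 -> PF2 p -> PF2 (L x * p).
Proof.
move=> /andP[hx0 hx1] [Hn H]; split=> [m|a b s hab hs].
  by rewrite czL addr_ge0 // mulr_ge0 // subr_ge0.
rewrite !czL.
set G := cz p.
have F1 : G (a - s - 1) * G (b + s - 1) <= G (a - 1) * G (b - 1).
  have -> : a - s - 1 = (a - 1) - s by ring.
  have -> : b + s - 1 = (b - 1) + s by ring.
  by apply: H => //; lia.
have F2 := H a b s hab hs.
have F3 : G (a - s - 1) * G (b + s) <= G (a - 1) * G b.
  have -> : a - s - 1 = (a - 1) - s by ring.
  by apply: H => //; lia.
have F4 : G (a - s) * G (b + s - 1) <= G a * G (b - 1) + (G (a - 1) * G b - G (a - s - 1) * G (b + s)).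
  have [hab'|hab'] : a < b \/ a = b by lia.
    have : G (a - s) * G (b - 1 + s) <= G a * G (b - 1) by apply: H => //; lia.
    have -> : b - 1 + s = b + s - 1 by ring.
    by move=> F; rewrite -[X in X <= _]addr0 lerD // subr_ge0.
  subst b.
  have [hs0|hs0] : s = 0 \/ 0 < s by lia.
    subst s; have e1 : a - 0 = a by lia.
    have e2 : a + 0 = a by lia.
    rewrite e1 ?e2 /=; lra.
  have : G ((a - 1) - (s - 1)) * G (a + (s - 1)) <= G (a - 1) * G a by apply: H => //; lia.
  have -> : a - 1 - (s - 1) = a - s by ring.
  have -> : a + (s - 1) = a + s - 1 by ring.
  move=> F; rewrite mulrC; lra.
have Hx1 : 0 <= 1 - x by rewrite subr_ge0.
have P1 : 0 <= x * x * (G (a - 1) * G (b - 1) - G (a - s - 1) * G (b + s - 1)).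
  by rewrite mulr_ge0 ?mulr_ge0 // subr_ge0.
have P2 : 0 <= (1 - x) * (1 - x) * (G a * G b - G (a - s) * G (b + s)).
  by rewrite mulr_ge0 ?mulr_ge0 // subr_ge0.
have P3 : 0 <= x * (1 - x) * (G a * G (b - 1) + (G (a - 1) * G b - G (a - s - 1) * G (b + s)) - G (a - s) * G (b + s - 1)).
  by rewrite mulr_ge0 ?mulr_ge0 // subr_ge0.
nra.
Qed.


Lemma PF2_prod (I : Type) (r : seq I) (F : I -> R) :
  (forall i, 0 <= F i <= 1) -> PF2 (\prod_(i <- r) L (F i)).
Proof.
move=> HF; elim: r => [|x r IH]; first by rewrite big_nil; exact: PF2_1.
by rewrite big_cons; apply: PF2_L.
Qed.

Lemma key n (q : 'I_n -> R) i m :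
  bern_pmf q m = q i * bern_pmf_omit_pred q i m + (1 - q i) * bern_pmf_omit q i m.
Proof.
rewrite bern_coef (prod_split q i).
have -> : (L (q i) * \prod_(j < n) L (q0 q i j))`_m = cz (L (q i) * \prod_(j < n) L (q0 q i j)) m by [].
rewrite czL omit_eq bern_coef; congr (_ * _ + _).
case: m => [|m] /=; first by rewrite ?cz_neg.
by rewrite omit_eq bern_coef subn1.
Qed.

Lemma logconc n (q : 'I_n -> R) i m :
  (forall j, 0 <= q j <= 1) ->
  bern_pmf_omit_pred q i m * bern_pmf_omit q i m.+1 <= bern_pmf_omit q i m * bern_pmf_omit q i m.
Proof.
move=> Hq.
have [_ H] : PF2 (\prod_(j < n) L (q0 q i j)).
  apply: PF2_prod => j; rewrite /q0; case: eqP => _ //; by rewrite lexx ler01.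
have := H m m 1 (lexx _) ler01.
have -> : (Posz m + 1 = Posz m.+1)%R by lia.
rewrite !omit_eq !bern_coef /=.
case: m => [|m] /=.
  by rewrite ?cz_neg // mul0r => _; rewrite -expr2 sqr_ge0.
by rewrite omit_eq bern_coef subn1.
Qed.
End S.
Unset Implicit Arguments.

Theorem proposition5p2 (R : realFieldType) (n : nat) (a b : 'I_n -> R)
  (hrange : forall (i : 'I_n) (s : R), 0 <= s <= 1 -> 0 <= affp a b s i <= 1)
  (hderiv : forall i : 'I_n, 0 <= b i)
  (hv : 0 < \sum_(i < n) b i)
  (t : R) (ht : 0 <= t <= 1) (k : nat) (hk : (k < n)%N)
  (hfk : 0 < bern_pmf (affp a b t) k)
  (hfk1 : 0 < bern_pmf (affp a b t) k.+1) :
  alpha a b t k <= alpha a b t k.+1.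
Proof.
rewrite /alpha.
set q := affp a b t.
set V := \sum_(i < n) b i.
have Hq : forall j, 0 <= q j <= 1 by move=> j; exact: hrange.
set N1 := \sum_(i < n) _.
set N2 := \sum_(i < n) _.
set fk := bern_pmf q k.
set fk1 := bern_pmf q k.+1.
have HN : N1 * fk1 <= N2 * fk.
  rewrite /N1 /N2 !mulr_suml; apply: ler_sum => i _.
  rewrite /fk /fk1 (key q i k.+1) (key q i k) /=.
  have := logconc i k Hq.
  have := Hq i; case/andP => hq0 hq1.
  have hb := hderiv i.
  set P := bern_pmf_omit_pred q i k.
  set g0 := bern_pmf_omit q i k.
  set g1 := bern_pmf_omit q i k.+1.
  move=> LC.
  rewrite -subr_ge0.
  have -> : b i * q i * g0 * (q i * P + (1 - q i) * g0) -
      b i * q i * P * (q i * g0 + (1 - q i) * g1) =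
      b i * q i * (1 - q i) * (g0 * g0 - P * g1) by ring.
  by rewrite !mulr_ge0 // subr_ge0.
have HV : 0 < V * fk by rewrite mulr_gt0.
have HV1 : 0 < V * fk1 by rewrite mulr_gt0.
rewrite ler_pdivrMr // mulrAC ler_pdivlMr //.
by rewrite mulrCA [N2 * _]mulrCA ler_pM2l.
Qed.
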